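(* Let $N\ge1$, $\Delta v=1/N$, $v_j=-1+\frac{\Delta v}{2}+(j-1)\Delta v$ for $j=1,\dots,2N$, $v_{j+1/2}=-1+j\Delta v$ for $j=0,\dots,2N$ (so $v_{1/2}=-1$, $v_{2N+1/2}=1$), and $V=(v_1,\dots,v_{2N})^T$. Define $D\in\mathcal{M}_{2N,2N}(\mathbb{R})$ by $$(DF)_j=\frac{1}{\Delta v^2}\Big((1-v_{j+1/2}^2)(F_{j+1}-F_j)-(1-v_{j-1/2}^2)(F_j-F_{j-1})\Big),\quad j=1,\dots,2N,$$ (the terms involving $F_0$ and $F_{2N+1}$ vanish since $1-v_{1/2}^2=1-v_{2N+1/2}^2=0$). Then $D\mathbf{1}=0$ and $DV=-2V$, where $\mathbf{1}=(1,\dots,1)^T$. Moreover $D$ is symmetric, its off-diagonal coefficients are nonnegative, and $I+\delta D$ is a bistochastic matrix for all $\delta>0$ small enough.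
   Context: $D$ is the discretization of the one-dimensional Fokker–Planck operator $\partial_v((1-v^2)\partial_v f)$ on $v\in[-1,1]$. A bistochastic matrix is a matrix with nonnegative entries whose rows and columns each sum to $1$. *)

(* Defs.v *)
(* Indices are 0-based: i : 'I_(2*N) corresponds to j = i+1. *)
From mathcomp Require Import all_boot all_order all_algebra.
Set Implicit Arguments. Unset Strict Implicit. Unset Printing Implicit Defensive.
Import Order.TTheory GRing.Theory Num.Theory.
Local Open Scope ring_scope.

Definition dv (R : realFieldType) (N : nat) : R := (N%:R)^-1.

Definition vc (R : realFieldType) (N : nat) (i : nat) : R :=
  -1 + dv R N / 2 + i%:R * dv R N.

Definition vf (R : realFieldType) (N : nat) (k : nat) : R :=
  -1 + k%:R * dv R N.

Definition Vvec (R : realFieldType) (N : nat) : 'cV[R]_(2 * N) :=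
  \col_(i < 2 * N) vc R N i.

Definition ones (R : realFieldType) (n : nat) : 'cV[R]_n := \col_(i < n) 1.

(* (DF)_i = 1/dv^2 ((1 - vf(i+1)^2)(F_{i+1} - F_i) - (1 - vf(i)^2)(F_i - F_{i-1}))
   written as matrix entries (out-of-range neighbours have zero coefficient). *)
Definition Dmx (R : realFieldType) (N : nat) : 'M[R]_(2 * N) :=
  \matrix_(i < 2 * N, k < 2 * N)
    ((dv R N ^+ 2)^-1 *
     (if k == i.+1 :> nat then 1 - vf R N i.+1 ^+ 2
      else if k.+1 == i :> nat then 1 - vf R N i ^+ 2
      else if k == i then - ((1 - vf R N i.+1 ^+ 2) + (1 - vf R N i ^+ 2))
      else 0)).

Definition bistochastic (R : realFieldType) (n : nat) (A : 'M[R]_n) : Prop :=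
  (forall i j, 0 <= A i j) /\
  (forall i, \sum_(j < n) A i j = 1) /\
  (forall j, \sum_(i < n) A i j = 1).

(* Main.v *)
Require Import Defs.
From mathcomp Require Import all_boot all_order all_algebra.
From mathcomp Require Import zify ring lra.
Import Order.TTheory GRing.Theory Num.Theory.
Local Open Scope ring_scope.

Lemma sum_if1 (R : realFieldType) n (j : nat) (x : nat -> R) :
  \sum_(k < n) (if (k:nat) == j then x k else 0) = if (j < n)%N then x j else 0.
Proof.
elim: n => [|n IH]; first by rewrite big_ord0.
rewrite big_ord_recr /= IH.
case: eqP => /= [<-|Hn].
  by rewrite ltnn ltnSn add0r.
rewrite addr0; case: (ltnP j n) => H.
  by rewrite ltnS ltnW.
have -> : (j < n.+1)%N = false by lia.
done.
Qed.

Lemma sum_if1p (R : realFieldType) n (i : nat) (x : nat -> R) :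
  \sum_(k < n) (if (k.+1 == i)%N then x k else 0) =
  if (0 < i)%N && (i.-1 < n)%N then x i.-1 else 0.
Proof.
case: i => [|i] /=.
  by rewrite big1.
by rewrite -(@sum_if1 R n i x).
Qed.

Section S.
Variables (R : realFieldType) (N : nat).
Hypothesis hN : (1 <= N)%N.
Local Notation h := (dv R N).
Definition aa (i : nat) : R := 1 - vf R N i.+1 ^+ 2.
Definition bb (i : nat) : R := 1 - vf R N i ^+ 2.

Lemma hpos : 0 < h.
Proof. by rewrite /dv invr_gt0 ltr0n. Qed.
Lemma hN1 : h * N%:R = 1.
Proof. rewrite /dv mulVf // pnatr_eq0; lia. Qed.

Lemma bb0 : bb 0 = 0.
Proof. by rewrite /bb /vf mul0r addr0 expr2 mulrNN mulr1 subrr. Qed.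
Lemma aaend : aa (2 * N).-1 = 0.
Proof.
rewrite /aa /vf prednK; last lia.
rewrite natrM -mulrA (mulrC N%:R) hN1 mulr1.
have ->: (-1 + 2 : R) = 1 by lra.
by rewrite expr1n subrr.
Qed.

Lemma row_lemma (F : nat -> R) (i : 'I_(2 * N)) :
  \sum_(k < 2 * N) Dmx R N i k * F k =
  (h ^+ 2)^-1 * (aa i * (F i.+1 - F i) - bb i * (F i - F i.-1)).
Proof.
have E : forall k : 'I_(2*N), Dmx R N i k * F k =
   (h ^+ 2)^-1 * ((if (k:nat) == i.+1 then aa i * F k else 0) +
                  (if (k.+1 == i)%N then bb i * F k else 0) +
                  (if (k:nat) == i then - (aa i + bb i) * F k else 0)).
  move=> k; rewrite mxE -mulrA; congr (_ * _).
  rewrite /aa /bb.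
  have -> : (k == i) = ((k:nat) == i) by [].
  do 3 (case: ifP => /eqP ?); rewrite ?addr0 ?add0r ?mul0r //; exfalso; lia.
under eq_bigr do rewrite E.
rewrite -mulr_sumr !big_split /=.
rewrite (@sum_if1 R _ _ (fun k => aa i * F k)) (@sum_if1p R _ _ (fun k => bb i * F k)) (@sum_if1 R _ _ (fun k => - (aa i + bb i) * F k)) ltn_ord /=.
congr (_ * _).
have -> : (i.-1 < 2 * N)%N = true by have := ltn_ord i; lia.
rewrite andbT.
case: (ltnP i.+1 (2 * N)) => h1.
  case: (posnP i) => h0.
    rewrite h0 bb0 /=; ring.
  rewrite ?h0 /=; ring.
have hi : (i : nat) = (2 * N).-1 by have := ltn_ord i; lia.
have -> : aa i = 0 by rewrite hi aaend.
case: (posnP i) => h0.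
  rewrite h0 bb0 /=; ring.
rewrite ?h0 /=; ring.
Qed.

Lemma face_nonneg k : (k <= 2 * N)%N -> 0 <= 1 - vf R N k ^+ 2.
Proof.
move=> hk; rewrite /vf.
have h0 := hpos; have h1 := hN1.
have hk' : (k%:R <= (2 * N)%:R :> R) by rewrite ler_nat.
rewrite natrM in hk'.
have t0 : 0 <= k%:R * h by rewrite mulr_ge0 // ltW.
have t2 : k%:R * h <= 2.
  have := ler_wpM2r (ltW h0) hk'.
  rewrite -mulrA (mulrC N%:R) h1 mulr1 //.
nra.
Qed.

Lemma face_le1 k : 1 - vf R N k ^+ 2 <= 1.
Proof. rewrite lerBlDr lerDl; exact: sqr_ge0. Qed.

Lemma Dsym : (Dmx R N)^T = Dmx R N.
Proof.
apply/matrixP => i k; rewrite !mxE.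
have -> : (k == i) = ((k:nat) == i) by [].
have -> : (i == k) = ((i:nat) == k) by [].
congr (_ * _).
repeat (case: ifP => /eqP ?); rewrite ?addr0 ?add0r ?mul0r //; try (exfalso; lia).
all: match goal with H : (nat_of_ord _ = _) |- _ => by rewrite H end.
Qed.
End S.

Theorem proposition4 (R : realFieldType) (N : nat) (hN : (1 <= N)%N) :
  Dmx R N *m ones R (2 * N) = 0 /\
  Dmx R N *m Vvec R N = (-2) *: Vvec R N /\
  (Dmx R N)^T = Dmx R N /\
  (forall i k : 'I_(2 * N), i != k -> 0 <= Dmx R N i k) /\
  (exists delta0 : R, 0 < delta0 /\
     forall delta : R, 0 < delta -> delta <= delta0 ->
       bistochastic (1%:M + delta *: Dmx R N)).
Proof.
have h0 := @hpos R N hN; have h1 := @hN1 R N hN.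
have row1 : forall i : 'I_(2 * N), \sum_(k < 2 * N) Dmx R N i k * 1 = 0.
  move=> i.
  by rewrite (@row_lemma R N hN (fun _ => 1)) !subrr !mulr0 subrr mulr0.
have Ds := @Dsym R N hN.
have sym : forall i j, Dmx R N i j = Dmx R N j i.
  by move=> i j; rewrite -{1}Ds mxE.
have offd : forall i k : 'I_(2 * N), i != k -> 0 <= Dmx R N i k.
  move=> i k; rewrite mxE.
  have -> : (k == i) = ((k:nat) == i) by [].
  have -> : (i == k) = ((i:nat) == k) by [].
  move=> hik.
  apply: mulr_ge0; first by rewrite invr_ge0 exprn_ge0 // ltW.
  have := ltn_ord i; have := ltn_ord k.
  case: ifP => /eqP H; first by move=> *; apply: face_nonneg; lia.
  case: ifP => /eqP H'; first by move=> *; apply: face_nonneg; lia.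
  case: ifP => /eqP H''; first by move: hik; rewrite H'' eqxx.
  done.
split.
  apply/matrixP => i j; rewrite mxE [RHS]mxE.
  under eq_bigr do rewrite [ones _ _ _ _]mxE.
  by rewrite row1.
split.
  apply/matrixP => i j; rewrite mxE [RHS]mxE [Vvec _ _ _ _]mxE.
  under eq_bigr do rewrite [Vvec _ _ _ _]mxE.
  rewrite (@row_lemma R N hN (fun k => vc R N k)).
  have e1 : forall m : nat, vc R N m.+1 - vc R N m = dv R N.
    by move=> m; rewrite /vc -addn1 natrD; ring.
  have e2 : bb R N i * (vc R N i - vc R N i.-1) = bb R N i * dv R N.
    case: (nat_of_ord i) => [|m]; first by rewrite (bb0 R N) !mul0r.
    by rewrite e1.
  rewrite e1 e2 /aa /bb /vf /vc mulrSr.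
  have hn0 : dv R N != 0 by rewrite gt_eqF.
  by field.
split; first exact: Ds.
split; first exact: offd.
have hc : 0 < dv R N ^- 2 by rewrite invr_gt0 exprn_gt0.
exists (dv R N ^+ 2 / 2); split; first by rewrite divr_gt0 // exprn_gt0.
move=> delta d0 d1.
have dc : delta * dv R N ^- 2 <= 1/2.
  rewrite -(ler_pM2r hc) in d1.
  by move: d1; rewrite mulrAC mulfV ?mul1r // gt_eqF // exprn_gt0.
have E : forall i j, (1%:M + delta *: Dmx R N) i j = (i == j)%:R + delta * Dmx R N i j.
  by move=> i j; rewrite !mxE.
have S1 : forall i : 'I_(2 * N), \sum_(j < 2 * N) ((i == j)%:R : R) = 1.
  move=> i; rewrite (bigD1 i) //= eqxx big1 ?addr0 // => j /negbTE.
  by rewrite eq_sym => ->.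
have rowS : forall i : 'I_(2 * N), \sum_(j < 2 * N) (1%:M + delta *: Dmx R N) i j = 1.
  move=> i; under eq_bigr do rewrite E.
  rewrite big_split /= S1 -mulr_sumr.
  under eq_bigr do rewrite -[Dmx R N i _]mulr1.
  by rewrite row1 mulr0 addr0.
split; last split.
- move=> i j; rewrite E.
  case: (eqVneq i j) => [<-|hij]; last first.
    by rewrite add0r mulr_ge0 ?offd // ltW.
  rewrite mxE.
  have -> : (i == i) = ((i:nat) == i) by [].
  rewrite eqxx (gtn_eqF (ltnSn _)) (ltn_eqF (ltnSn _)) /= mulrA.
  have a0 := @face_nonneg R N hN i.+1 (ltn_ord i).
  have b0 : 0 <= bb R N i by apply: (@face_nonneg R N hN); have := ltn_ord i; lia.
  have a1 := face_le1 R N i.+1; have b1 := face_le1 R N i.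
  rewrite /bb in b0.
  have dc0 : 0 <= delta * dv R N ^- 2 by rewrite mulr_ge0 // ltW.
  nra.
- exact: rowS.
- move=> j; rewrite -[RHS](rowS j); apply: eq_bigr => i _.
  by rewrite !E eq_sym sym.
Qed.
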